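(* Let $0<c<1/2$. For every $B\in\mathcal F$ and every integer $m\ge0$, $$g(m,B)\le\frac{2c}{1-c}\,\big|\mathrm{OPT}^m_{\mathrm{large}}(B)\big|,$$ where $$g(m,B)=\sum_{i\in\mathrm{OPT}^m_{\mathrm{large}}(B)}\ \sum_{B'\in\mathrm{Chain}[M(i),B]} c^{\,1+\mathrm{brank}(i,B')}.$$
   Context: Let $U$ be a finite ground set with weight function $w:U\to\mathbb{R}_{\ge0}$ taking pairwise distinct values. Let $\mathcal F$ be a laminar family of subsets of $U$ (for any $A,B\in\mathcal F$: $A\subseteq B$, $B\subseteq A$, or $A\cap B=\emptyset$) with $U\in\mathcal F$; each $A\in\mathcal F$ has a positive integer capacity $\mu(A)$, with $\mu(A)<\mu(B)$ whenever $A\subsetneq B$. A set $X\subseteq U$ is independent iff $|X\cap A|\le\mu(A)$ for all $A\in\mathcal F$. For $i\in U$, $M(i)$ denotes the minimal member of $\mathcal F$ containing $i$. For $A\subseteq B$ in $\mathcal F$, $\mathrm{Chain}[A,B]$ is the sequence of all $B'\in\mathcal F$ with $A\subseteq B'\subseteq B$, ordered by inclusion from $A$ up to $B$. For $B\in\mathcal F$, $\mathrm{OPT}(B)$ is the maximum-weight independent subset of $B$, and $\mathrm{OPT}^m_{\mathrm{large}}(B)$ is the set of the $m$ largest-weight elements of $\mathrm{OPT}(B)$ (all of $\mathrm{OPT}(B)$ if it has fewer than $m$ elements). The backward rank $\mathrm{brank}(i,B)$ is the number of elements of $\mathrm{OPT}(B)$ of weight less than $w(i)$. Standing convention of the paper: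 by padding $U$ with dummy elements of infinitesimal weight, one assumes $|\mathrm{OPT}(B)|=\mu(B)$ for every $B\in\mathcal F$. *)

(* Defs.v *)
From HB Require Import structures.
From mathcomp Require Import all_boot all_order all_algebra.
Set Implicit Arguments. Unset Strict Implicit. Unset Printing Implicit Defensive.
Import Order.TTheory GRing.Theory Num.Theory.
Local Open Scope ring_scope.

(* Ground set U is the whole finite type T. *)

Definition laminar (T : finType) (F : {set {set T}}) : Prop :=
  forall A B, A \in F -> B \in F ->
    [|| A \subset B, B \subset A | [disjoint A & B]].

Definition indep (T : finType) (F : {set {set T}}) (mu : {set T} -> nat)
  (X : {set T}) : bool :=
  [forall A in F, (#|X :&: A| <= mu A)%N].

(* M(i): minimal member of F containing i (chosen of minimal cardinality;
   under laminarity with U \in F it is the unique inclusion-minimal one). *)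
Definition Mset (T : finType) (F : {set {set T}}) (i : T) : {set T} :=
  [arg min_(A < setT | (A \in F) && (i \in A)) #|A|].

Definition OPT_large (T : finType) (R : realFieldType) (w : T -> R)
  (OPTB : {set T}) (m : nat) : {set T} :=
  [set i in OPTB | leq (#|[set j in OPTB | w i < w j]|).+1 m].

Definition brank (T : finType) (R : realFieldType) (w : T -> R)
  (OPTB' : {set T}) (i : T) : nat :=
  #|[set j in OPTB' | w j < w i]|.

Definition gfun (T : finType) (R : realFieldType) (w : T -> R)
  (F : {set {set T}}) (OPT : {set T} -> {set T}) (c : R) (m : nat)
  (B : {set T}) : R :=
  \sum_(i in OPT_large w (OPT B) m)
     \sum_(B' in F | (Mset F i \subset B') && (B' \subset B))
        c ^+ (1 + brank w (OPT B') i).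

(* Main.v *)
Require Import Defs.
From HB Require Import structures.
From mathcomp Require Import all_boot all_order all_algebra.
From mathcomp Require Import zify ring lra.
Set Implicit Arguments. Unset Strict Implicit. Unset Printing Implicit Defensive.
Import Order.TTheory GRing.Theory Num.Theory.
Local Open Scope ring_scope.

Section S.
Variables (T : finType) (R : realFieldType) (w : T -> R)
  (F : {set {set T}}) (mu : {set T} -> nat) (OPT : {set T} -> {set T}) (c : R).
Hypothesis w_inj : injective w.
Hypothesis lamF : forall A B, A \in F -> B \in F ->
    [|| A \subset B, B \subset A | [disjoint A & B]].
Hypothesis FT : setT \in F.
Hypothesis mu_incr : forall A B, A \in F -> B \in F -> A \proper B -> (mu A < mu B)%N.
Hypothesis OPTok : forall B, B \in F ->
     [/\ OPT B \subset B, [forall A in F, (#|OPT B :&: A| <= mu A)%N] &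
         forall Y : {set T}, Y \subset B -> [forall A in F, (#|Y :&: A| <= mu A)%N] ->
           \sum_(j in Y) w j <= \sum_(j in OPT B) w j].
Hypothesis OPTcard : forall B, B \in F -> #|OPT B| = mu B.

Definition heavier (S : {set T}) (j : T) := [set k in S | w j < w k].

Lemma indep_card Z A : Z \in F -> A \in F -> (#|OPT Z :&: A| <= mu A)%N.
Proof.
move=> ZF AF; have [_ /forallP /(_ A) /implyP H _] := OPTok ZF; exact: H.
Qed.

Lemma OPT_sub Z : Z \in F -> OPT Z \subset Z.
Proof. by move=> ZF; have [] := OPTok ZF. Qed.

Lemma lam_cases A B x : A \in F -> B \in F -> x \in A -> x \in B ->
  A \subset B \/ B \subset A.
Proof.
move=> AF BF xA xB; case/or3P: (lamF AF BF) => [->|->|d]; [by left|by right|].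
by rewrite (disjointFr d xA) in xB.
Qed.

Lemma char_in Z A j : Z \in F -> j \in OPT Z -> A \in F -> j \in A ->
  (#|heavier (OPT Z :&: A) j| < mu A)%N.
Proof.
move=> ZF jO AF jA.
have sub : heavier (OPT Z :&: A) j \subset (OPT Z :&: A) :\ j.
  apply/subsetP => k; rewrite !inE => /andP [-> hk]; rewrite andbT.
  by apply/eqP => kj; rewrite kj ltxx in hk.
have e := cardsD1 j (OPT Z :&: A); rewrite !inE jO jA /= in e.
have := subset_leq_card sub; have := indep_card ZF AF; lia.
Qed.

Lemma char_out Z j : Z \in F -> j \in Z -> j \notin OPT Z ->
  exists2 A, A \in F & (j \in A) && (mu A <= #|heavier (OPT Z :&: A) j|)%N.
Proof.
move=> ZF jZ jnO.
suff : [exists A, (A \in F) && ((j \in A) && (mu A <= #|heavier (OPT Z :&: A) j|)%N)].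
  by case/existsP => A /andP [AF H]; exists A.
case E : [exists A, (A \in F) && ((j \in A) && (mu A <= #|heavier (OPT Z :&: A) j|)%N)]; first by [].
move/negbT: E => Hn; exfalso.
have H : forall A, A \in F -> j \in A -> (#|heavier (OPT Z :&: A) j| < mu A)%N.
  move=> A AF jA; rewrite ltnNge; apply/negP => h; apply: (negP Hn).
  by apply/existsP; exists A; rewrite AF jA h.
pose P := fun A : {set T} => (A \in F) && ((j \in A) && (mu A <= #|OPT Z :&: A|)%N).
have PZ : P Z.
  by rewrite /P ZF jZ (setIidPl (OPT_sub ZF)) (OPTcard ZF) leqnn.
case: (@arg_minnP _ Z P (fun A => #|A|) PZ) => A0 /andP [A0F /andP [jA0 tA0]] minA0.
have : ~~ (OPT Z :&: A0 \subset heavier (OPT Z :&: A0) j).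
  apply/negP => s; have := subset_leq_card s; have := H _ A0F jA0; lia.
case/subsetPn => k; rewrite inE => /andP [kO kA0]; rewrite !inE kO kA0 /= => nkj.
have kj : k != j by apply/eqP => e; rewrite -e kO in jnO.
have wkj : w k < w j.
  rewrite lt_neqAle leNgt nkj andbT; apply/eqP => e; move/eqP: kj; apply.
  exact: w_inj.
have [_ _ opt] := OPTok ZF.
pose Y := j |: (OPT Z :\ k).
have jnD : j \notin OPT Z :\ k by rewrite !inE (negbTE jnO) andbF.
have YZ : Y \subset Z.
  apply/subsetP => x; rewrite !inE => /orP [/eqP -> //|/andP [_ xO]].
  exact: (subsetP (OPT_sub ZF)).
have Yind : [forall A in F, (#|Y :&: A| <= mu A)%N].
  apply/forallP => A; apply/implyP => AF.
  have hA := indep_card ZF AF.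
  case jA : (j \in A); last first.
    apply: leq_trans hA; apply: subset_leq_card; apply/subsetP => x.
    rewrite !inE => /andP [/orP [/eqP ->|/andP [_ ->]] xA] //=.
    by rewrite xA in jA.
  case kA : (k \in A).
    have s : Y :&: A \subset j |: ((OPT Z :&: A) :\ k).
      apply/subsetP => x; rewrite !inE => /andP [/orP [->//|/andP [-> ->]] ->].
      by rewrite orbT.
    apply: leq_trans (subset_leq_card s) _.
    have e := cardsD1 k (OPT Z :&: A); rewrite !inE kO kA /= in e.
    rewrite cardsU1; move: (leq_b1 (j \notin (OPT Z :&: A) :\ k)).
    clear -e hA; lia.
  have AA0 : A \subset A0.
    case: (lam_cases AF A0F jA jA0) => // s.
    by rewrite (subsetP s _ kA0) in kA.
  have AnA0 : A != A0 by apply/eqP => e; rewrite e kA0 in kA.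
  have ltA : (#|A| < #|A0|)%N by apply: proper_card; rewrite properEneq AnA0 AA0.
  have nPA : ~~ P A.
    by apply/negP => PA; move: (minA0 _ PA) ltA; clear; lia.
  move: nPA; rewrite /P AF jA /= -ltnNge => ltA'.
  have s : Y :&: A \subset j |: (OPT Z :&: A).
    apply/subsetP => x; rewrite !inE => /andP [/orP [->//|/andP [_ ->]] ->].
    by rewrite orbT.
  apply: leq_trans (subset_leq_card s) _; rewrite cardsU1.
  move: (leq_b1 (j \notin OPT Z :&: A)); clear -ltA'; lia.
have := opt _ YZ Yind.
rewrite /Y big_setU1 //= (big_setD1 k kO) /=.
move=> h; have : w k < w j by [].
move=> _; move: h; rewrite -subr_ge0 => h.
have : w j - w k <= 0 by lra.
by rewrite subr_le0 leNgt wkj.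
Qed.

Lemma heavy_same X Y i : X \in F -> Y \in F -> X \subset Y -> i \in OPT Y -> i \in X ->
  forall j, j \in X -> w i < w j -> (j \in OPT X) = (j \in OPT Y).
Proof.
move=> XF YF XY iO iX.
suff H : forall n j, (#|[set k | (w j < w k)%R]| < n)%N -> j \in X -> w i < w j ->
    (j \in OPT X) = (j \in OPT Y) by move=> j; exact: H.
elim=> [//|n IH] j hn jX ij.
have sc : forall A : {set T}, A \subset X -> heavier (OPT X :&: A) j = heavier (OPT Y :&: A) j.
  move=> A AX; apply/setP => k; rewrite !inE.
  case jk : (w j < w k); rewrite ?andbF ?andbT //.
  case kA : (k \in A); rewrite ?andbF ?andbT //.
  apply: IH; last 2 first.
  - exact: (subsetP AX).
  - exact: lt_trans jk.
  have s : [set k' | w k < w k'] \subset [set k' | w j < w k'] :\ k.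
    apply/subsetP => x; rewrite !inE => h; rewrite (lt_trans jk h) andbT.
    by apply/eqP => e; rewrite e ltxx in h.
  have e := cardsD1 k [set k' | w j < w k']; rewrite !inE jk /= in e.
  have := subset_leq_card s; clear -e hn; lia.
have jY : j \in Y by exact: (subsetP XY).
apply/idP/idP => jO.
- case: (boolP (j \in OPT Y)) => // jnY; exfalso.
  case: (char_out YF jY jnY) => A AF /andP [jA hA].
  case: (lam_cases AF XF jA jX) => s.
  + rewrite -(sc _ s) in hA; move: (char_in XF jO AF jA) hA; clear; lia.
  + have iA : i \in A by exact: (subsetP s).
    have h1 := char_in YF iO AF iA.
    have sub : heavier (OPT Y :&: A) j \subset heavier (OPT Y :&: A) i.
      apply/subsetP => k; rewrite !inE => /andP [-> h]; exact: lt_trans h.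
    move: (subset_leq_card sub) h1 hA; clear; lia.
- case: (boolP (j \in OPT X)) => // jnX; exfalso.
  case: (char_out XF jX jnX) => A AF /andP [jA hA].
  case sAX : (A \subset X).
  + rewrite (sc _ sAX) in hA; move: (char_in YF jO AF jA) hA; clear; lia.
  + case: (lam_cases AF XF jA jX); first by rewrite sAX.
    move=> sXA.
    have pr : X \proper A by rewrite properE sXA sAX.
    have h1 := mu_incr XF AF pr.
    have sub : heavier (OPT X :&: A) j \subset OPT X.
      by apply/subsetP => k; rewrite !inE => /andP [/andP [-> _] _].
    move: (subset_leq_card sub) h1 hA; rewrite (OPTcard XF); clear; lia.
Qed.

Variables (B : {set T}) (m : nat).
Hypothesis BF : B \in F.
Definition L := OPT_large w (OPT B) m.

Definition pos (S : {set T}) (i : T) := #|[set j in S | w i <= w j]|.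

Lemma L_sub : L \subset OPT B.
Proof. by apply/subsetP => x; rewrite inE => /andP []. Qed.

Lemma L_up i j : i \in L -> j \in OPT B -> w i < w j -> j \in L.
Proof.
rewrite !inE => /andP [iO hi] jO ij; rewrite jO /=.
have s : [set k in OPT B | w j < w k] \subset [set k in OPT B | w i < w k] :\ j.
  apply/subsetP => x; rewrite !inE => /andP [-> h]; rewrite (lt_trans ij h) !andbT.
  by apply/eqP => e; rewrite e ltxx in h.
have e := cardsD1 j [set k in OPT B | w i < w k]; rewrite !inE jO ij /= in e.
move: (subset_leq_card s) e hi; clear; lia.
Qed.

Lemma brank_ge X i : X \in F -> X \subset B -> i \in L -> i \in X ->
  (mu X <= brank w (OPT X) i + pos (L :&: X) i)%N.
Proof.
move=> XF XB iL iX.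
have iO : i \in OPT B := subsetP L_sub _ iL.
rewrite -(OPTcard XF).
have s : OPT X \subset [set j in OPT X | w j < w i] :|: [set j in L :&: X | w i <= w j].
  apply/subsetP => j jO; rewrite in_setU.
  case: (boolP (w j < w i)) => h; first by rewrite in_set jO h.
  rewrite -leNgt in h; apply/orP; right; rewrite in_set h andbT in_setI.
  have jX : j \in X := subsetP (OPT_sub XF) _ jO.
  rewrite jX andbT.
  case: (boolP (j == i)) => [/eqP -> //|ji].
  have ij : w i < w j.
    rewrite lt_neqAle h andbT; apply/eqP => e; move/eqP: ji; apply; exact: w_inj.
  apply: (L_up iL _ ij).
  by rewrite -(heavy_same XF BF XB iO iX jX ij).
apply: leq_trans (subset_leq_card s) _.
rewrite /brank /pos.
move: (cardsUI [set j in OPT X | w j < w i] [set j in L :&: X | w i <= w j]); clear; lia.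
Qed.

Lemma node_sum s : forall (S : {set T}) n, #|S| = s -> (s <= n)%N ->
  \sum_(i in S) c ^+ (n - pos S i) = \sum_(p < s) c ^+ (n - p.+1).
Proof.
elim: s => [|s IH] S n hS hn.
  by move/eqP: hS; rewrite cards_eq0 => /eqP ->; rewrite big_set0 big_ord0.
have : (0 < #|S|)%N by rewrite hS.
rewrite card_gt0 => /set0Pn [x xS].
case: (@arg_maxnP _ x (fun i => i \in S) (pos S) xS) => k kS maxk.
have light : forall j, j \in S -> w k <= w j.
  move=> j jS; rewrite leNgt; apply/negP => jk.
  have sb : [set l in S | w k <= w l] \subset [set l in S | w j <= w l] :\ j.
    apply/subsetP => l; rewrite !inE => /andP [-> h]; rewrite (le_trans (ltW jk) h) !andbT.
    by apply/eqP => e; rewrite e leNgt jk in h.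
  have e := cardsD1 j [set l in S | w j <= w l]; rewrite !inE jS lexx /= in e.
  move: (subset_leq_card sb) e (maxk j jS); rewrite /pos; clear; lia.
have pk : pos S k = s.+1.
  rewrite /pos -hS; apply: eq_card => l; rewrite !inE.
  by case lS : (l \in S); rewrite //= (light _ lS).
rewrite (big_setD1 k kS) /= pk big_ord_recr /= addrC; congr (_ + _).
have hS' : #|S :\ k| = s by move: (cardsD1 k S); rewrite kS hS; clear; lia.
rewrite -(IH (S :\ k) n hS'); last by clear -hn; lia.
apply: eq_bigr => i; rewrite !inE => /andP [ik iS]; congr (_ ^+ (_ - _)).
rewrite /pos; apply: eq_card => l; rewrite !inE.
case: (boolP (l == k)) => [/eqP ->|lk] /=; last by [].
rewrite kS /=; apply/negP => h.
have : w k = w i by apply/le_anti; rewrite h light.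
by move/w_inj => e; rewrite e eqxx in ik.
Qed.

Lemma geom l n : (l <= n)%N ->
  (1 - c) * \sum_(p < l) c ^+ (n - p.+1) = c ^+ (n - l) - c ^+ n.
Proof.
elim: l => [|l IH] hl; first by rewrite big_ord0 subn0 mulr0 subrr.
rewrite big_ord_recr /= mulrDr IH; last by clear -hl; lia.
have -> : (n - l = (n - l.+1).+1)%N by clear -hl; lia.
rewrite exprS; ring.
Qed.

Lemma LX_le X : X \in F -> (#|L :&: X| <= mu X)%N.
Proof.
move=> XF; apply: leq_trans (indep_card BF XF); apply: subset_leq_card.
by apply: setSI; exact: L_sub.
Qed.

Lemma node_bound X : X \in F -> X \subset B -> 0 <= c -> c < 1 ->
  \sum_(i in L :&: X) c ^+ (1 + brank w (OPT X) i)
    <= c / (1 - c) * (c ^+ (mu X - #|L :&: X|) - c ^+ mu X).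
Proof.
move=> XF XB c0 c1.
have lmu := LX_le XF.
apply: (@le_trans _ _ (\sum_(i in L :&: X) c * c ^+ (mu X - pos (L :&: X) i))).
  apply: ler_sum => i; rewrite in_setI => /andP [iL iX].
  rewrite add1n exprS; apply: ler_wpM2l => //; apply: ler_wiXn2l => //.
    exact: ltW.
  move: (brank_ge XF XB iL iX); clear; lia.
rewrite -mulr_sumr (node_sum (erefl _) lmu) -(geom lmu).
set x := \sum_(_ < _) _.
have ne : 1 - c != 0 by rewrite subr_eq0; apply/eqP => e; rewrite e ltxx in c1.
rewrite (_ : c / (1 - c) * ((1 - c) * x) = c * x) //; field; exact: ne.
Qed.

Definition lX (S : {set T}) := #|L :&: S|.
Definition tX (Y : {set T}) := c ^+ (mu Y - lX Y) - c ^+ mu Y.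
Definition Sub (S : {set T}) n := \sum_(Y in F | (Y \subset S) && (mu Y < n)%N) tX Y.
Definition Psi (S : {set T}) n := 2 * (1 - c) * (lX S)%:R
  - (1 - c ^+ lX S) * (1 + c ^+ (n - lX S)) - (1 - c) * Sub S n.
Definition closed n (S : {set T}) := forall Y x, Y \in F -> (mu Y < n)%N ->
  x \in Y -> x \in S -> Y \subset S.

Hypothesis c0 : 0 < c.
Hypothesis c1 : c < 1.

Lemma c_ge0 : 0 <= c. Proof. exact: ltW. Qed.
Lemma c_le1 : c <= 1. Proof. exact: ltW. Qed.
Lemma cX_ge0 k : 0 <= c ^+ k. Proof. exact: exprn_ge0 c_ge0. Qed.
Lemma cX_le1 k : c ^+ k <= 1. Proof. exact: exprn_ile1 c_ge0 c_le1. Qed.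
Lemma cX_mono a b : (a <= b)%N -> c ^+ b <= c ^+ a.
Proof. by move=> h; apply: ler_wiXn2l; [exact: c_ge0|exact: c_le1|]. Qed.

Lemma tX_ge0 Y : 0 <= tX Y.
Proof. by rewrite /tX subr_ge0; apply: cX_mono; exact: leq_subr. Qed.

Lemma sub_pred (I : finType) (P Q : pred I) (f : I -> R) :
  (forall i, P i -> Q i) -> (forall i, Q i -> 0 <= f i) ->
  \sum_(i | P i) f i <= \sum_(i | Q i) f i.
Proof.
move=> PQ f0; rewrite [X in _ <= X](bigID P) /=.
have -> : \sum_(i | Q i && P i) f i = \sum_(i | P i) f i.
  by apply: eq_bigl => i; case Pi : (P i); rewrite ?andbT ?andbF ?PQ.
rewrite lerDl; apply: sumr_ge0 => i /andP [Qi _]; exact: f0.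
Qed.

Lemma Sub_split (S S1 S2 : {set T}) n :
  (forall Y, Y \in F -> Y \subset S -> (mu Y < n)%N -> (Y \subset S1) || (Y \subset S2)) ->
  Sub S n <= Sub S1 n + Sub S2 n.
Proof.
move=> H; rewrite /Sub (bigID (fun Y : {set T} => Y \subset S1)) /=; apply: lerD.
  apply: sub_pred => [Y|Y _]; last exact: tX_ge0.
  by case/andP => /andP [-> /andP [_ ->]] ->.
apply: sub_pred => [Y|Y _]; last exact: tX_ge0.
case/andP => /andP [YF /andP [YS Yn]] nY; rewrite YF Yn andbT.
by move: (H Y YF YS Yn); rewrite (negbTE nY).
Qed.

Lemma Sub_zero (S : {set T}) n : (forall Y, Y \in F -> Y \subset S -> (mu Y < n)%N -> lX Y = 0%N) ->
  Sub S n <= 0.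
Proof.
move=> H; rewrite /Sub big1 // => Y /andP [YF /andP [YS Yn]].
by rewrite /tX (H Y YF YS Yn) subn0 subrr.
Qed.

Lemma base (S : {set T}) n : (lX S <= 1)%N -> Sub S n <= 0 -> 0 <= Psi S n.
Proof.
move=> hl hs; rewrite /Psi.
have h1 := cX_le1 (n - lX S).
have h0 := c1.
have hc : 0 <= 1 - c by rewrite subr_ge0; exact: c_le1.
have h2 : (1 - c) * Sub S n <= 0 by apply: mulr_ge0_le0.
move: h1; case: (lX S) hl => [|[|//]] _ h1.
  rewrite expr0 (_ : 0%:R = 0 :> R) //; lra.
rewrite expr1 (_ : 1%:R = 1 :> R) //.
have : 0 <= (1 - c) * (1 - c ^+ (n - 1)) by apply: mulr_ge0; lra.
lra.
Qed.

Lemma merge (S1 S2 : {set T}) n : [disjoint S1 & S2] -> (lX (S1 :|: S2) <= n)%N ->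
  Sub (S1 :|: S2) n <= Sub S1 n + Sub S2 n ->
  Psi S1 n + Psi S2 n <= Psi (S1 :|: S2) n.
Proof.
move=> d hl hs.
have e : lX (S1 :|: S2) = (lX S1 + lX S2)%N.
  rewrite /lX setIUr; move: (cardsUI (L :&: S1) (L :&: S2)).
  have -> : #|(L :&: S1) :&: (L :&: S2)| = 0%N.
    apply/eqP; rewrite cards_eq0; apply/eqP/setP => z; rewrite !inE.
    apply/negP => /andP [/andP [_ z1] /andP [_ z2]].
    by rewrite (disjointFr d z1) in z2.
  by rewrite addn0.
rewrite e in hl; rewrite /Psi e.
move: (lX S1) (lX S2) hl => l1 l2 hl.
set E := c ^+ (n - (l1 + l2)).
have e1 : c ^+ (n - l1) = E * c ^+ l2.
  by rewrite /E -exprD; congr (_ ^+ _); clear -hl; lia.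
have e2 : c ^+ (n - l2) = E * c ^+ l1.
  by rewrite /E -exprD; congr (_ ^+ _); clear -hl; lia.
rewrite e1 e2 exprD natrD.
have hQ := cX_le1 l1; have hy := cX_le1 l2; have hE : E <= 1 by exact: cX_le1.
have h1 : 0 <= (1 - c ^+ l1) * (1 - c ^+ l2) * (1 - E).
  by apply: mulr_ge0; [apply: mulr_ge0|]; rewrite subr_ge0.
have h2 : (1 - c) * Sub (S1 :|: S2) n <= (1 - c) * (Sub S1 n + Sub S2 n).
  by apply: ler_wpM2l => //; rewrite subr_ge0; exact: c_le1.
lra.
Qed.

Lemma mu_sub (X Y : {set T}) : X \in F -> Y \in F -> X \subset Y -> (mu X <= mu Y)%N.
Proof.
move=> XF YF XY; case: (eqVneq X Y) => [-> //|ne].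
by apply: ltnW; apply: mu_incr => //; rewrite properEneq ne XY.
Qed.

Lemma step (Y : {set T}) n : Y \in F -> (mu Y < n)%N -> Psi Y (mu Y) <= Psi Y n.
Proof.
move=> YF hn.
have hl := LX_le YF; rewrite -/(lX Y) in hl.
have hs : Sub Y n <= tX Y + Sub Y (mu Y).
  apply: (@le_trans _ _ (\sum_(Z in F | (Z \subset Y) && (mu Z < (mu Y).+1)%N) tX Z)).
    apply: sub_pred => [Z|Z _]; last exact: tX_ge0.
    case/andP => ZF /andP [ZY _]; rewrite ZF ZY /= ltnS; exact: mu_sub.
  rewrite (bigD1 Y) /=; last by rewrite YF subxx ltnSn.
  apply: lerD => //; apply: sub_pred => [Z|Z _]; last exact: tX_ge0.
  case/andP => /andP [ZF /andP [ZY _]] nZ; rewrite ZF ZY /=.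
  by apply: mu_incr => //; rewrite properEneq nZ ZY.
rewrite /Psi; rewrite /tX in hs.
move: (lX Y) hl hs => l hl hs.
set a := c ^+ (mu Y - l).
have ea : c ^+ mu Y = a * c ^+ l by rewrite /a -exprD subnK.
rewrite ea in hs.
have h1 : c ^+ (n - l) <= c * a.
  by rewrite /a -exprS; apply: cX_mono; clear -hl hn; lia.
have hq : 0 <= 1 - c ^+ l by rewrite subr_ge0; exact: cX_le1.
have h1' := ler_wpM2l hq h1.
have h2 : (1 - c) * Sub Y n <= (1 - c) * (a - a * c ^+ l + Sub Y (mu Y)).
  by apply: ler_wpM2l => //; rewrite subr_ge0; exact: c_le1.
lra.
Qed.

Lemma closed_self (Y : {set T}) : Y \in F -> closed (mu Y) Y.
Proof.
move=> YF Z z ZF hZ zZ zY.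
case: (lam_cases ZF YF zZ zY) => // s.
have := mu_sub YF ZF s; clear -hZ; lia.
Qed.

Lemma Psi_ge0 n : forall S : {set T}, (lX S <= n)%N -> closed n S -> 0 <= Psi S n.
Proof.
elim/ltn_ind: n => n IHn.
suff H : forall k (S : {set T}), (#|S| <= k)%N -> (lX S <= n)%N -> closed n S -> 0 <= Psi S n.
  by move=> S; exact: (H #|S|).
elim=> [|k IHk] S hk hl hc.
  have S0 : S = set0 by apply/eqP; rewrite -cards_eq0; clear -hk; lia.
  rewrite S0; apply: base.
    by rewrite /lX setI0 cards0.
  apply: Sub_zero => Y _ YS _; apply/eqP; rewrite cards_eq0 -subset0.
  by apply: subset_trans (subsetIr _ _) YS.
case: (boolP (S == set0)) => [/eqP S0|/set0Pn [x xS]].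
  by apply: (IHk S) => //; rewrite S0 cards0.
case: (boolP [exists Y, (Y \in F) && (x \in Y) && (mu Y < n)%N]).
- case/existsP => Y0 PY0.
  case: (@arg_maxnP _ Y0 (fun Y : {set T} => (Y \in F) && (x \in Y) && (mu Y < n)%N) mu PY0)
    => Y /andP [/andP [YF xY] Yn] maxY.
  have YS : Y \subset S := hc Y x YF Yn xY xS.
  have dich : forall Z, Z \in F -> (mu Z < n)%N -> Z \subset S ->
      (Z \subset Y) || (Z \subset S :\: Y).
    move=> Z ZF Zn ZS.
    case: (boolP [disjoint Z & Y]) => dZ.
      apply/orP; right; apply/subsetP => z zZ; rewrite inE (subsetP ZS _ zZ) andbT.
      by rewrite (disjointFr dZ zZ).
    move: dZ; rewrite -setI_eq0 => /set0Pn [z]; rewrite inE => /andP [zZ zY].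
    case: (lam_cases ZF YF zZ zY) => [-> //|sYZ].
    have xZ : x \in Z := subsetP sYZ _ xY.
    have := maxY Z; rewrite ZF xZ Zn => /(_ isT) hm.
    case: (eqVneq Y Z) => [-> |ne]; first by rewrite subxx.
    have := mu_incr YF ZF; rewrite properEneq ne sYZ => /(_ isT); clear -hm; lia.
  have eS : Y :|: S :\: Y = S by rewrite -{1}(setIidPr YS) setID.
  have d : [disjoint Y & S :\: Y].
    by rewrite -setI_eq0; apply/eqP/setP => z; rewrite !inE; case: (z \in Y).
  have hl' : (lX (Y :|: S :\: Y) <= n)%N by rewrite eS.
  have hs : Sub (Y :|: S :\: Y) n <= Sub Y n + Sub (S :\: Y) n.
    by apply: Sub_split => Z ZF ZS Zn; apply: dich => //; rewrite -eS.
  have := merge d hl' hs; rewrite eS => hm.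
  have p1 : 0 <= Psi (S :\: Y) n.
    apply: IHk.
    - have := cardsD1 x S; have := cardsD1 x (S :\: Y); rewrite xS !inE xY /=.
      have : (#|S :\: Y :\ x| <= #|S :\ x|)%N.
        by apply: subset_leq_card; apply/subsetP => z; rewrite !inE => /andP [-> /andP [_ ->]].
      clear -hk; lia.
    - apply: leq_trans _ hl; apply: subset_leq_card; apply: setIS; exact: subsetDl.
    - move=> Z z ZF Zn zZ zS'.
      have zS : z \in S by move: zS'; rewrite inE => /andP [].
      have := dich Z ZF Zn (hc Z z ZF Zn zZ zS); case/orP => // sZY.
      by move: zS'; rewrite inE (subsetP sZY _ zZ).
  have p2 : 0 <= Psi Y n.
    apply: le_trans (step YF Yn).
    apply: (IHn (mu Y) Yn); first exact: LX_le.
    exact: closed_self.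
  lra.
- move=> nex.
  have noY : forall Z, Z \in F -> (mu Z < n)%N -> x \notin Z.
    move=> Z ZF Zn; apply/negP => xZ; move: nex; rewrite negb_exists => /forallP /(_ Z).
    by rewrite ZF xZ Zn.
  have eS : [set x] :|: S :\ x = S by rewrite setD1K.
  have d : [disjoint [set x] & S :\ x].
    by rewrite -setI_eq0; apply/eqP/setP => z; rewrite !inE; case: (z == x).
  have hl' : (lX ([set x] :|: S :\ x) <= n)%N by rewrite eS.
  have hs : Sub ([set x] :|: S :\ x) n <= Sub [set x] n + Sub (S :\ x) n.
    apply: Sub_split => Z ZF ZS Zn; apply/orP; right; apply/subsetP => z zZ.
    rewrite eS in ZS; rewrite !inE (subsetP ZS _ zZ) andbT.
    by apply/eqP => e; move: (noY Z ZF Zn); rewrite -e zZ.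
  have := merge d hl' hs; rewrite eS => hm.
  have p1 : 0 <= Psi (S :\ x) n.
    apply: IHk.
    - have := cardsD1 x S; rewrite xS; clear -hk; lia.
    - apply: leq_trans _ hl; apply: subset_leq_card; apply: setIS; exact: subsetDl.
    - move=> Z z ZF Zn zZ zS'.
      have zS : z \in S by move: zS'; rewrite inE => /andP [].
      apply/subsetP => y yZ; rewrite !inE (subsetP (hc Z z ZF Zn zZ zS) _ yZ) andbT.
      by apply/eqP => e; move: (noY Z ZF Zn); rewrite -e yZ.
  have p2 : 0 <= Psi [set x] n.
    apply: base.
      by rewrite /lX; apply: leq_trans (subset_leq_card (subsetIr _ _)) _; rewrite cards1.
    apply: Sub_zero => Z ZF Zx Zn; apply/eqP; rewrite cards_eq0 -subset0.
    apply/subsetP => z; rewrite inE => /andP [_ zZ].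
    have := subsetP Zx _ zZ; rewrite inE => /eqP e.
    by move: (noY Z ZF Zn); rewrite -e zZ.
  lra.
Qed.

Lemma total_bound :
  \sum_(X in F | X \subset B) tX X <= 2 * (#|L|)%:R.
Proof.
have hB := Psi_ge0 (LX_le BF) (closed_self BF).
have := le_trans hB (step BF (ltnSn _)).
have hs : \sum_(X in F | X \subset B) tX X <= Sub B (mu B).+1.
  apply: sub_pred => [X|X _]; last exact: tX_ge0.
  case/andP => XF XB; rewrite XF XB /= ltnS; exact: mu_sub.
have eL : lX B = #|L| by rewrite /lX (setIidPl (subset_trans L_sub (OPT_sub BF))).
rewrite /Psi eL => h.
have hq : 0 <= 1 - c ^+ #|L| by rewrite subr_ge0; exact: cX_le1.
have hq2 : 0 <= (1 - c ^+ #|L|) * (1 + c ^+ ((mu B).+1 - #|L|)).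
  by apply: mulr_ge0 => //; have := cX_ge0 ((mu B).+1 - #|L|); lra.
have hc : 0 < 1 - c by rewrite subr_gt0.
set Sm := \sum_(X in F | X \subset B) tX X in hs *.
have : (1 - c) * Sm <= (1 - c) * (2 * (#|L|)%:R).
  have := ler_wpM2l (ltW hc) hs; lra.
by rewrite ler_pM2l.
Qed.

Lemma Mset_in i : i \in Mset F i.
Proof.
rewrite /Mset; case: arg_minnP => [|A /andP [_ ->] //].
by rewrite FT inE.
Qed.

Lemma gfun_bound : gfun w F OPT c m B <= 2 * c / (1 - c) * (#|OPT_large w (OPT B) m|)%:R.
Proof.
rewrite /gfun.
apply: (@le_trans _ _ (\sum_(i in L) \sum_(X in F | (i \in X) && (X \subset B))
                      c ^+ (1 + brank w (OPT X) i))).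
  apply: ler_sum => i iL; apply: sub_pred => [X|X _]; last exact: cX_ge0.
  case/andP => XF /andP [MX XB]; rewrite XF XB andbT; apply: (subsetP MX); exact: Mset_in.
rewrite (exchange_big_dep (fun X : {set T} => (X \in F) && (X \subset B))) /=; last first.
  by move=> i X _ /andP [-> /andP [_ ->]].
apply: (@le_trans _ _ (\sum_(X in F | X \subset B) c / (1 - c) * tX X)).
  apply: ler_sum => X /andP [XF XB].
  rewrite (eq_bigl (fun i => i \in L :&: X)); last first.
    by move=> i; rewrite in_setI XF XB /= andbT.
  rewrite /tX /lX; exact: (node_bound XF XB c_ge0 c1).
rewrite -mulr_sumr.
have hc : 0 < 1 - c by rewrite subr_gt0.
have hcc : 0 <= c / (1 - c) by apply: divr_ge0; [exact: c_ge0|exact: ltW].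
apply: le_trans (ler_wpM2l hcc total_bound) _.
by rewrite (_ : c / (1 - c) * (2 * #|L|%:R) = 2 * c / (1 - c) * #|L|%:R) //; ring.
Qed.

End S.





Theorem lemma3 (T : finType) (R : realFieldType) (w : T -> R)
  (F : {set {set T}}) (mu : {set T} -> nat) (OPT : {set T} -> {set T})
  (c : R) :
  (forall i, 0 <= w i) ->
  injective w ->
  laminar F ->
  setT \in F ->
  (forall A, A \in F -> (0 < mu A)%N) ->
  (forall A B, A \in F -> B \in F -> A \proper B -> (mu A < mu B)%N) ->
  (* OPT(B) is a maximum-weight independent subset of B *)
  (forall B, B \in F ->
     [/\ OPT B \subset B, indep F mu (OPT B) &
         forall Y : {set T}, Y \subset B -> indep F mu Y ->
           \sum_(j in Y) w j <= \sum_(j in OPT B) w j]) ->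
  (* standing padding convention: |OPT(B)| = mu(B) *)
  (forall B, B \in F -> #|OPT B| = mu B) ->
  0 < c -> c < 1 / 2 ->
  forall (B : {set T}) (m : nat), B \in F ->
    gfun w F OPT c m B <= (2 * c / (1 - c)) * (#|OPT_large w (OPT B) m|)%:R.

Proof.
move=> w0 winj lam FT mu0 muinc opt card c0 ch B m BF.
have c1 : c < 1 by lra.
apply: gfun_bound; [exact: winj|exact: lam|exact: FT|exact: muinc|exact: opt|exact: card|exact: BF|exact: c0|exact: c1].
Qed.
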